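(* In the setting of the context (with $\rho<1$ and $\mu_l\le\mu_h$): (i) if $F(y_0)\neq0$, then $1<1/\eta_1<y_0$; (ii) $T'(1)<0$.
   Context: Fix $p,q,\mu_h,\mu_l\in(0,1)$ with $p+q+\mu_h+\mu_l=1$ and $\mu_l\le\mu_h$. For real $x$ write $\bar x=1-x$; let $\rho_h=p/\mu_h$, $\rho_l=q/\mu_l$, $\rho=\rho_h+\rho_l$, and assume $\rho<1$. Let $\Delta(y)=(p\mu_h-\bar p\bar\mu_h)^2(qy+\bar q)^2-2(p\mu_h+\bar p\bar\mu_h)(qy+\bar q)+1$, with zeros $y_0<y_1$ given by $y_{0,1}=\frac{p\mu_h+\bar p\bar\mu_h\mp2\sqrt{p\mu_h\bar p\bar\mu_h}}{(p\mu_h-\bar p\bar\mu_h)^2q}-\frac{\bar q}{q}$; $\sqrt{\Delta(y)}$ denotes the branch analytic on $\mathbb{C}\setminus[y_0,y_1]$ that is positive for real $y<y_0$. Let $F(y)=(\bar p+\mu_h-2\bar p\mu_l)qy^2+[(\bar p+\mu_h-2\bar p\mu_l)\bar q+2\bar pq\mu_l-1]y+2\bar p\bar q\mu_l$ and $T(y)=F(y)-y\sqrt{\Delta(y)}$. Let $\eta_1=\frac{(1-\mu_h\bar q-\bar p\bar q\bar\mu_l-\bar pq\mu_l)+\sqrt{(1-\mu_h\bar q-\bar p\bar q\bar\mu_l-\bar pq\mu_l)^2+4\bar p\bar q(\mu_h-\bar p\mu_l)\bar\mu_lq}}{2\bar p\bar q\mu_l}$. *)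

(* Defs.v *)
From Stdlib Require Import Reals Lra.
Open Scope R_scope.

Definition bar (x : R) : R := 1 - x.

Definition Delta (p q mh : R) (y : R) : R :=
  (p * mh - bar p * bar mh) ^ 2 * (q * y + bar q) ^ 2
  - 2 * (p * mh + bar p * bar mh) * (q * y + bar q) + 1.

(* the smaller zero y0 of Delta *)
Definition y0 (p q mh : R) : R :=
  (p * mh + bar p * bar mh - 2 * sqrt (p * mh * bar p * bar mh))
    / ((p * mh - bar p * bar mh) ^ 2 * q) - bar q / q.

(* the larger zero y1 of Delta *)
Definition y1 (p q mh : R) : R :=
  (p * mh + bar p * bar mh + 2 * sqrt (p * mh * bar p * bar mh))
    / ((p * mh - bar p * bar mh) ^ 2 * q) - bar q / q.

Definition Fpoly (p q mh ml : R) (y : R) : R :=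
  (bar p + mh - 2 * bar p * ml) * q * y ^ 2
  + ((bar p + mh - 2 * bar p * ml) * bar q + 2 * bar p * q * ml - 1) * y
  + 2 * bar p * bar q * ml.

(* T(y) = F(y) - y sqrt(Delta(y)), on real y < y0 where the chosen branch of
   sqrt(Delta) is the positive real square root. *)
Definition Tfun (p q mh ml : R) (y : R) : R :=
  Fpoly p q mh ml y - y * sqrt (Delta p q mh y).

Definition eta1 (p q mh ml : R) : R :=
  let A := 1 - mh * bar q - bar p * bar q * bar ml - bar p * q * ml in
  (A + sqrt (A ^ 2 + 4 * bar p * bar q * (mh - bar p * ml) * bar ml * q))
    / (2 * bar p * bar q * ml).

(* Main.v *)
From Pilot Require Import Defs.
From Stdlib Require Import Reals Lra Psatz.
From Coquelicot Require Import Coquelicot.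
Import Pilot.Defs.
Open Scope R_scope.

Theorem lemma4p1 (p q mh ml : R)
  (hp : 0 < p < 1) (hq : 0 < q < 1) (hmh : 0 < mh < 1) (hml : 0 < ml < 1)
  (hsum : p + q + mh + ml = 1) (hmlh : ml <= mh)
  (hrho : p / mh + q / ml < 1) :
  (Fpoly p q mh ml (y0 p q mh) <> 0 ->
     1 < / eta1 p q mh ml < y0 p q mh)
  /\
  (exists l, derivable_pt_lim (Tfun p q mh ml) 1 l /\ l < 0).
Proof.
  assert (hE : p * ml + q * mh - mh * ml < 0).
  { assert (H := hrho). unfold Rdiv in H.
    assert (p * / mh * (mh*ml) = p*ml) by (field; lra).
    assert (q * / ml * (mh*ml) = q*mh) by (field; lra).
    assert (0 < mh*ml) by nra. nra. }
  assert (hpm : p < mh).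
  { nra. }
  assert (Hid : forall y, Fpoly p q mh ml y ^ 2 - y ^ 2 * Delta p q mh y =
     4 * bar p * ml * (y - 1) * (q * y + bar q) *
     ((mh - bar p * ml) * bar ml * q / ml * y ^ 2
      + (1 - mh * bar q - bar p * bar q * bar ml - bar p * q * ml) * y
      - bar p * bar q * ml)).
  { intro y. replace mh with (1 - p - q - ml) by lra.
    unfold Fpoly, Delta, bar. field. lra. }
  split.
  - intro HF.
    assert (hb : 0 < bar p) by (unfold bar; lra).
    assert (hbq : 0 < bar q) by (unfold bar; lra).
    assert (hbmh : 0 < bar mh) by (unfold bar; lra).
    assert (hbml : 0 < bar ml) by (unfold bar; lra).
    set (r := sqrt (p * mh * bar p * bar mh)).
    assert (hr0 : 0 <= r) by apply sqrt_pos.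
    assert (hr2 : r * r = p * mh * bar p * bar mh).
    { apply sqrt_sqrt. assert (0 < p*mh) by nra. assert (0 < bar p * bar mh) by nra. nra. }
    set (u := p * mh + bar p * bar mh).
    set (k := (p * mh - bar p * bar mh) ^ 2).
    assert (hk : 0 < k).
    { unfold k. assert (p * mh - bar p * bar mh = -(q+ml)) by (unfold bar; lra).
      rewrite H. nra. }
    assert (hk2 : k = u * u - 4 * (r * r)) by (rewrite hr2; unfold k, u; ring).
    assert (hu0 : 0 < u) by (unfold u; nra).
    assert (hu2 : 0 < u - 2 * r) by nra.
    assert (h1u0 : 0 < 1 - u) by (unfold u, bar; nra).
    assert (h1u : 0 < 1 - u - 2 * r).
    { assert ((1 - u - 2*r) * (1 - u + 2*r) = (mh - p)^2).
      { replace ((1 - u - 2*r) * (1 - u + 2*r)) with ((1-u)*(1-u) - 4 * (r*r)) by ring.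
        rewrite hr2. unfold u, bar. ring. }
      nra. }
    set (Y := y0 p q mh).
    assert (hs0 : q * Y + bar q = (u - 2 * r) / k).
    { unfold Y, y0. fold r u k. field. lra. }
    assert (hs1 : 1 < (u - 2 * r) / k).
    { apply (Rmult_lt_reg_r k); [lra|]. unfold Rdiv. rewrite Rmult_assoc, Rinv_l by lra. nra. }
    assert (hY1 : 1 < Y) by (unfold bar in hs0; nra).
    assert (hDY : Delta p q mh Y = 0).
    { unfold Delta. fold u. fold k. rewrite hs0.
      replace (k * ((u - 2 * r) / k) ^ 2 - 2 * u * ((u - 2 * r) / k) + 1)
        with (((u - 2*r)^2 - 2 * u * (u - 2*r) + k) / k) by (field; lra).
      rewrite hk2. replace ((u - 2 * r) ^ 2 - 2 * u * (u - 2 * r) + (u * u - 4 * (r * r))) with 0 by ring.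
      unfold Rdiv; ring. }
    set (A := 1 - mh * bar q - bar p * bar q * bar ml - bar p * q * ml).
    set (B := bar p * bar q * ml).
    set (g := (mh - bar p * ml) * bar ml * q / ml).
    assert (hB : 0 < B) by (unfold B; apply Rmult_lt_0_compat; [apply Rmult_lt_0_compat|]; lra).
    assert (hg : 0 < g).
    { unfold g. assert (0 < mh - bar p * ml) by (unfold bar; nra).
      unfold Rdiv. apply Rmult_lt_0_compat; [|apply Rinv_0_lt_compat; lra].
      assert (0 < (mh - bar p * ml) * bar ml) by nra. nra. }
    assert (hgAB : g + A - B < 0).
    { replace (g + A - B) with ((p * ml + q * mh - mh * ml) / ml).
      - apply Rdiv_neg_pos; lra.
      - unfold g, A, B. replace mh with (1 - p - q - ml) by lra. unfold bar. field. lra. }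
    assert (hhY : 0 < g * Y ^ 2 + A * Y - B).
    { assert (H := Hid Y). rewrite hDY in H. fold A g B in H.
      assert (0 < Fpoly p q mh ml Y ^ 2).
      { assert (Fpoly p q mh ml Y * Fpoly p q mh ml Y > 0).
        { destruct (Rlt_or_le 0 (Fpoly p q mh ml Y)) as [h|h]; [nra|].
          destruct h as [h|h]; [nra| contradiction]. }
        nra. }
      assert (0 < 4 * bar p * ml * (Y - 1) * (q * Y + bar q)).
      { assert (0 < q * Y + bar q) by nra.
        assert (0 < 4 * bar p * ml) by nra.
        assert (0 < 4 * bar p * ml * (Y - 1)) by nra. nra. }
      destruct (Rlt_or_le 0 (g * Y ^ 2 + A * Y - B)) as [h|h]; [exact h|].
      exfalso. nra. }
    unfold eta1. cbv zeta. fold A.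
    set (S := sqrt (A ^ 2 + 4 * bar p * bar q * (mh - bar p * ml) * bar ml * q)).
    assert (hS2 : S * S = A ^ 2 + 4 * B * g).
    { replace (A ^ 2 + 4 * B * g) with (A ^ 2 + 4 * bar p * bar q * (mh - bar p * ml) * bar ml * q)
        by (unfold B, g; field; lra).
      apply sqrt_sqrt.
      assert (0 < mh - bar p * ml) by (unfold bar; nra).
      assert (0 < 4 * bar p * bar q * (mh - bar p * ml) * bar ml * q).
      { repeat apply Rmult_lt_0_compat; lra. }
      assert (0 <= A ^ 2) by (apply pow2_ge_0). lra. }
    assert (hS0 : 0 <= S) by apply sqrt_pos.
    replace (2 * bar p * bar q * ml) with (2 * B) by (unfold B; ring).
    set (e := (A + S) / (2 * B)).
    assert (he2 : e * (2 * B) = A + S) by (unfold e; field; lra).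
    assert (he0 : 0 < e).
    { assert (0 < A + S) by nra. nra. }
    assert (hquad : B * e ^ 2 - A * e - g = 0).
    { replace (B * e ^ 2 - A * e - g) with ((S * S - A * A - 4 * B * g) / (4 * B))
        by (unfold e; field; lra).
      rewrite hS2. unfold Rdiv. ring. }
    assert (he1 : e < 1).
    { assert (S < 2 * B - A) by nra. nra. }
    assert (hinv : / e * e = 1) by (field; lra).
    assert (hinv0 : 0 < / e) by (apply Rinv_0_lt_compat; lra).
    split.
    + nra.
    + assert (hw : e ^ 2 * (g * Y ^ 2 + A * Y - B) = (e * Y - 1) * (g * (e * Y) + B * e ^ 2)).
      { assert (H : e ^ 2 * (g * Y ^ 2 + A * Y - B) - (e * Y - 1) * (g * (e * Y) + B * e ^ 2)
           = - (e * Y) * (B * e ^ 2 - A * e - g)) by ring.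
        rewrite hquad in H. lra. }
      assert (heY : 0 < e * Y) by (apply Rmult_lt_0_compat; lra).
      assert (hP : 0 < g * (e * Y) + B * e ^ 2).
      { assert (0 < g * (e * Y)) by (apply Rmult_lt_0_compat; lra).
        assert (0 < B * e ^ 2) by (apply Rmult_lt_0_compat; [lra| apply pow_lt; lra]). lra. }
      assert (hQ : 0 < e ^ 2 * (g * Y ^ 2 + A * Y - B)) by (apply Rmult_lt_0_compat; [apply pow_lt; lra| lra]).
      rewrite hw in hQ.
      assert (h1 : 1 < e * Y).
      { destruct (Rlt_or_le 1 (e * Y)) as [h|h]; [exact h|].
        exfalso. assert ((e * Y - 1) * (g * (e * Y) + B * e ^ 2) <= 0).
        { apply Rmult_le_0_r; lra. } lra. }
      replace Y with (/ e * (e * Y)) by (field; lra).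
      assert (/ e * 1 < / e * (e * Y)) by (apply Rmult_lt_compat_l; lra).
      lra.
  - assert (hD1 : (p * mh - bar p * bar mh) * ((p * mh - bar p * bar mh) * 1) *
      ((q * 1 + bar q) * ((q * 1 + bar q) * 1)) +
      - (2 * (p * mh + bar p * bar mh) * (q * 1 + bar q)) + 1 = (mh - p) ^ 2).
    { unfold bar; ring. }
    eexists. split.
    + apply is_derive_Reals. unfold Tfun, Fpoly, Delta.
      auto_derive.
      * rewrite hD1. nra.
      * rewrite hD1. rewrite sqrt_pow2 by lra. reflexivity.
    + match goal with |- ?l < 0 => replace l with (2 * bar p * (p * ml + q * mh - mh * ml) / (mh - p)) end.
      * unfold bar. apply Rdiv_neg_pos; [nra | nra].
      * replace mh with (1 - p - q - ml) by lra. unfold bar. field. lra.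
Qed.
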